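(* An even nonnegative integer $n$ satisfies $v(n)=1$ if and only if $n\in\{10,12\}$.
   Context: A hyperbinary expansion of a nonnegative integer $n$ is a word $x_0\cdots x_k$ over $\{0,1,2\}$ with $x_0\ne0$ and $\sum_i x_i2^{k-i}=n$. The empty word is the unique hyperbinary expansion of $0$. Write $\mathcal H(n)$ for the set of such expansions and $b(n)=|\mathcal H(n)|$. $A(n)$ is the directed graph on $\mathcal H(n)$ with an arc from $\mathbf x02\mathbf y$ to $\mathbf x10\mathbf y$, from $2\mathbf y$ to $10\mathbf y$, and from $\mathbf x12\mathbf y$ to $\mathbf x20\mathbf y$, for arbitrary words $\mathbf x,\mathbf y$ whenever both endpoints lie in $\mathcal H(n)$. $A(n)$ is connected. $v(n)$ denotes the cyclomatic number of $A(n)$: (number of arcs) $-\,b(n)+1$. *)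

(* Defs.v *)
From mathcomp Require Import all_boot all_algebra.
Set Implicit Arguments. Unset Strict Implicit. Unset Printing Implicit Defensive.

(* Words over {0,1,2} are represented as sequences of naturals. *)

(* value of x_0 ... x_k : sum_i x_i 2^(k-i) (Horner evaluation) *)
Definition hbval (w : seq nat) : nat := foldl (fun acc d => acc.*2 + d) 0 w.

(* w is a hyperbinary expansion of n: digits in {0,1,2}, x_0 <> 0
   (vacuous for the empty word), and value n. *)
Definition is_hyperbinary (n : nat) (w : seq nat) : bool :=
  [&& all (fun d => d <= 2) w, head 1 w != 0 & hbval w == n].

Fixpoint words (k : nat) : seq (seq nat) :=
  if k is k'.+1 then [seq d :: w | d <- [:: 0; 1; 2], w <- words k'] else [:: [::]].

(* every hyperbinary expansion of n has length <= trunc_log 2 n + 1,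
   since a word x_0..x_k with x_0 <> 0 has value >= 2^k *)
Definition Hset (n : nat) : seq (seq nat) :=
  filter (is_hyperbinary n) (flatten [seq words k | k <- iota 0 (trunc_log 2 n).+2]).

Definition b (n : nat) : nat := size (Hset n).

(* arcs: x02y -> x10y,  2y -> 10y,  x12y -> x20y *)
Definition arc (u w : seq nat) : bool :=
  [|| has (fun i => (u == take i u ++ [:: 0; 2] ++ drop i.+2 u) &&
                    (w == take i u ++ [:: 1; 0] ++ drop i.+2 u)) (iota 0 (size u)),
      (if u is 2 :: y then w == [:: 1, 0 & y] else false)
    | has (fun i => (u == take i u ++ [:: 1; 2] ++ drop i.+2 u) &&
                    (w == take i u ++ [:: 2; 0] ++ drop i.+2 u)) (iota 0 (size u)) ].

Definition narcs (n : nat) : nat :=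
  count (fun p => arc p.1 p.2) [seq (u, w) | u <- Hset n, w <- Hset n].

Definition v (n : nat) : int := ((narcs n)%:Z - (b n)%:Z + 1)%R.

(* Main.v *)
Require Import Defs.
From mathcomp Require Import all_boot all_algebra zify.
Set Implicit Arguments. Unset Strict Implicit. Unset Printing Implicit Defensive.


Lemma mem_mapcons (a d : nat) w s : (d :: w \in map (cons a) s) = (d == a) && (w \in s).
Proof.
apply/mapP/andP => [[y ys [-> ->]]|[/eqP -> ws]]; last by exists w.
by [].
Qed.

Lemma nil_mapcons (a : nat) s : ([::] \in map (cons a) s) = false.
Proof. by apply/mapP => -[]. Qed.

Lemma mem_words k w : (w \in words k) = (size w == k) && all (fun d => d <= 2) w.
Proof.
elim: k w => [|k IH] [|d w] //=.
  by rewrite !mem_cat !nil_mapcons.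
rewrite !mem_cat !mem_mapcons IH in_nil eqSS.
by case: d => [|[|[|d]]] //=; rewrite ?orbF ?andbF.
Qed.

Lemma uniq_words k : uniq (words k).
Proof.
elim: k => //= k IH.
rewrite !cat_uniq !map_inj_uniq //=; try by move=> ? ? [].
rewrite IH /= ?orbF ?andbT.
by apply/andP; split; apply/hasPn => -[|x xs]; rewrite ?nil_mapcons // ?mem_cat ?mem_mapcons ?in_nil ?orbF;
 case: x => [|[|[|x]]]; rewrite /= ?andbF ?orbF.
Qed.


Lemma hbval_rcons x d : hbval (rcons x d) = (hbval x).*2 + d.
Proof. by rewrite /hbval foldl_rcons. Qed.

Lemma foldl_acc a w :
  foldl (fun acc d => acc.*2 + d) a w = a * 2 ^ size w + hbval w.
Proof.
elim: w a => [|d w IH] a /=; first by rewrite muln1 addn0.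
rewrite IH /hbval /= IH IH expnS -!muln2; nia.
Qed.

Lemma hbval_cons d w : hbval (d :: w) = d * 2 ^ size w + hbval w.
Proof. by rewrite /hbval /= foldl_acc. Qed.

Lemma size_hyp n w : is_hyperbinary n w -> size w < (trunc_log 2 n).+2.
Proof.
case: w => [|d w] //= /and3P[_ d0 /eqP <-].
rewrite ltnS; apply: trunc_log_max => //.
rewrite hbval_cons; apply: leq_trans (leq_addr _ _).
by rewrite leq_pmull // lt0n.
Qed.

Lemma mem_Hset n w : (w \in Hset n) = is_hyperbinary n w.
Proof.
rewrite /Hset mem_filter; case H: (is_hyperbinary n w) => //; rewrite andTb.
apply/flattenP; exists (words (size w)).
  apply/mapP; exists (size w) => //; rewrite mem_iota /= add0n; exact: size_hyp H.
by rewrite mem_words eqxx; case/and3P: H.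
Qed.

Lemma uniq_flat a l : uniq (flatten [seq words k | k <- iota a l]).
Proof.
elim: l a => //= l IH a; rewrite cat_uniq uniq_words IH andbT.
apply/hasPn => w /flattenP[s /mapP[k]]; rewrite mem_iota => /andP[ak _] -> wk.
rewrite mem_words; move: wk; rewrite mem_words => /andP[/eqP -> _].
by rewrite gtn_eqF.
Qed.

Lemma uniq_Hset n : uniq (Hset n).
Proof. by rewrite filter_uniq // uniq_flat. Qed.

Lemma Hset0 : Hset 0 = [:: [::]].
Proof. by vm_compute. Qed.

Lemma hyp_rcons n x d : is_hyperbinary n (rcons x d) =
  [&& d <= 2, (x != [::]) || (d != 0), is_hyperbinary (hbval x) x & n == (hbval x).*2 + d].
Proof.
rewrite /is_hyperbinary hbval_rcons all_rcons eqxx andbT [n == _]eq_sym.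
case: x => [|a x] /=; first by case: (d <= 2); case: (d != 0); case: (_ == n).
by case: (d <= 2); case: (a <= 2); case: (a != 0); case: (all _ _).
Qed.


Lemma mem_maprcons (a d : nat) x s : (rcons x d \in map (rcons^~ a) s) = (d == a) && (x \in s).
Proof.
apply/mapP/andP => [[y ys /rcons_inj [-> ->]]|[/eqP -> ws]]; last by exists x.
by [].
Qed.

Lemma nil_maprcons (a : nat) s : ([::] \in map (rcons^~ a) s) = false.
Proof. by apply/mapP => -[[|? ?] ? ?]. Qed.

Lemma hypE m x : is_hyperbinary m x = is_hyperbinary (hbval x) x && (hbval x == m).
Proof. by rewrite /is_hyperbinary eqxx andbT andbA. Qed.

Lemma nil_Hset n : ([::] \in Hset n.+1) = false.
Proof. by rewrite mem_Hset /is_hyperbinary /=; case: n. Qed.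

Lemma Hset_odd m : perm_eq (Hset (2 * m + 1)) (map (rcons^~ 1) (Hset m)).
Proof.
apply: uniq_perm; rewrite ?map_inj_uniq ?uniq_Hset //; first exact: rcons_injl.
case/lastP => [|x d]; first by rewrite addn1 nil_Hset nil_maprcons.
rewrite mem_Hset hyp_rcons mem_maprcons mem_Hset [is_hyperbinary m x]hypE.
case: (is_hyperbinary _ x); rewrite ?andbF //=.
case: d => [|[|[|d]]] /=; rewrite ?andbF //; rewrite -muln2 ?orbT /=;
  apply/eqP/eqP; lia.
Qed.

Lemma Hset_even m : perm_eq (Hset (2 * m + 2))
  (map (rcons^~ 0) (Hset m.+1) ++ map (rcons^~ 2) (Hset m)).
Proof.
apply: uniq_perm; rewrite ?uniq_Hset //.
  rewrite cat_uniq !map_inj_uniq ?uniq_Hset //; try exact: rcons_injl.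
  rewrite andbT /=; apply/hasPn; case/lastP => [|x d]; first by rewrite nil_maprcons.
  by rewrite !mem_maprcons; case/andP => /eqP ->.
case/lastP => [|x d]; first by rewrite addn2 nil_Hset mem_cat !nil_maprcons.
rewrite mem_cat mem_Hset hyp_rcons !mem_maprcons !mem_Hset [is_hyperbinary m x]hypE
  [is_hyperbinary m.+1 x]hypE.
case: (is_hyperbinary _ x); rewrite ?andbF //=.
case: d => [|[|[|d]]] /=; rewrite ?andbF ?orbF //; rewrite -muln2 ?orbT /=.
- case: x => [|a x] /=. rewrite /hbval /=. apply/eqP; lia.
  apply/eqP/eqP; lia.
- apply/eqP; lia.
- apply/eqP/eqP; lia.
Qed.

Lemma b0 : b 0 = 1. Proof. by rewrite /b Hset0. Qed.
Lemma b_odd m : b (2 * m + 1) = b m.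
Proof. by rewrite /b (perm_size (Hset_odd m)) size_map. Qed.
Lemma b_even m : b (2 * m + 2) = b m.+1 + b m.
Proof. by rewrite /b (perm_size (Hset_even m)) size_cat !size_map. Qed.


Lemma hasPat (u w : seq nat) a1 a2 c1 c2 :
  reflect (exists x y, u = x ++ [:: a1; a2] ++ y /\ w = x ++ [:: c1; c2] ++ y)
   (has (fun i => (u == take i u ++ [:: a1; a2] ++ drop i.+2 u) &&
                  (w == take i u ++ [:: c1; c2] ++ drop i.+2 u)) (iota 0 (size u))).
Proof.
apply: (iffP hasP) => [[i _ /andP[/eqP e1 /eqP e2]]|[x [y [e1 e2]]]].
  by exists (take i u), (drop i.+2 u).
exists (size x); first by rewrite mem_iota e1 size_cat /= add0n; lia.
have -> : take (size x) u = x by rewrite e1 take_size_cat.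
have -> : drop (size x).+2 u = y.
  by rewrite e1 -add2n -drop_drop (drop_size_cat _ (erefl (size x))) /= drop0.
by rewrite -e1 -e2 !eqxx.
Qed.

Definition succ (x : seq nat) := rcons (take (size x).-1 x) (last 0 x).+1.

Lemma succ_rcons p e : succ (rcons p e) = rcons p e.+1.
Proof. by rewrite /succ last_rcons size_rcons /= -[rcons p e]cats1 take_size_cat. Qed.

Lemma arcP u w : reflect
  ((exists x y, u = x ++ [:: 0; 2] ++ y /\ w = x ++ [:: 1; 0] ++ y) \/
   (exists y, u = (2 :: y) /\ w = (1 :: 0 :: y)) \/
   (exists x y, u = x ++ [:: 1; 2] ++ y /\ w = x ++ [:: 2; 0] ++ y)) (Defs.arc u w).
Proof.
rewrite /Defs.arc; apply: (iffP or3P).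
- case=> [/hasPat H|H|/hasPat H]; [by left| |by right; right].
  right; left; case: u H => [|[|[|[|]]] y] //= /eqP ->; by exists y.
- case=> [H|[[y [-> ->]]|H]]; [by apply: Or31; apply/hasPat|by apply: Or32|].
  by apply: Or33; apply/hasPat.
Qed.

Lemma cat2 (p : seq nat) a b : p ++ [:: a; b] ++ [::] = rcons (rcons p a) b.
Proof. by rewrite -!cats1 -catA. Qed.

Lemma arc_rcons (x : seq nat) a y c : Defs.arc (rcons x a) (rcons y c) <->
  (a = c /\ Defs.arc x y) \/ (a = 2 /\ c = 0 /\ last 0 x < 2 /\ y = succ x).
Proof.
split.
- case/arcP => [[p [q [e1 e2]]]|[[q [e1 e2]]|[p [q [e1 e2]]]]].
  + case/lastP: q e1 e2 => [|q e].
      rewrite !cat2 => /rcons_inj[-> ->] /rcons_inj[-> ->].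
      by right; rewrite last_rcons succ_rcons.
    rewrite -!rcons_cat => /rcons_inj[-> ->] /rcons_inj[-> ->].
    by left; split => //; apply/arcP; left; exists p, q.
  + case/lastP: q e1 e2 => [|q e].
      case: x => [|? [|? ?]] //= [->]; case: y => [|? [|? [|? ?]]] //= [-> ->].
      by right.
    rewrite -!rcons_cons => /rcons_inj[-> ->] /rcons_inj[-> ->].
    by left; split => //; apply/arcP; right; left; exists q.
  + case/lastP: q e1 e2 => [|q e].
      rewrite !cat2 => /rcons_inj[-> ->] /rcons_inj[-> ->].
      by right; rewrite last_rcons succ_rcons.
    rewrite -!rcons_cat => /rcons_inj[-> ->] /rcons_inj[-> ->].
    by left; split => //; apply/arcP; right; right; exists p, q.
- case=> [[<- /arcP H]|[-> [-> [H ->]]]]; apply/arcP.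
  + case: H => [[p [q [-> ->]]]|[[q [-> ->]]|[p [q [-> ->]]]]].
    * by left; exists p, (rcons q a); rewrite !rcons_cat.
    * by right; left; exists (rcons q a).
    * by right; right; exists p, (rcons q a); rewrite !rcons_cat.
  + case/lastP: x H => [|p e]; first by right; left; exists [::].
    rewrite last_rcons succ_rcons; case: e => [|[|]] // _.
    * by left; exists p, [::]; rewrite !cat2.
    * by right; right; exists p, [::]; rewrite !cat2.
Qed.


Definition C (s t : seq (seq nat)) := \sum_(u <- s) count (Defs.arc u) t.

Lemma count_allpairs s t :
  count (fun p => Defs.arc p.1 p.2) [seq (u, w) | u <- s, w <- t] = C s t.
Proof.
rewrite /C; elim: s => [|x s IH]; first by rewrite big_nil.
by rewrite big_cons /= count_cat IH count_map.
Qed.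

Lemma C_perm s1 s2 t1 t2 : perm_eq s1 s2 -> perm_eq t1 t2 -> C s1 t1 = C s2 t2.
Proof.
move=> ps pt; rewrite /C (perm_big _ ps); apply: eq_bigr => u _.
by move/permP: pt.
Qed.

Lemma C_catl s1 s2 t : C (s1 ++ s2) t = C s1 t + C s2 t.
Proof. by rewrite /C big_cat. Qed.

Lemma C_catr s t1 t2 : C s (t1 ++ t2) = C s t1 + C s t2.
Proof. by rewrite /C -big_split; apply: eq_bigr => u _; rewrite count_cat. Qed.

Lemma C_map a c s t : C (map (rcons^~ a) s) (map (rcons^~ c) t) =
  \sum_(x <- s) count (fun y => Defs.arc (rcons x a) (rcons y c)) t.
Proof. by rewrite /C big_map; apply: eq_bigr => x _; rewrite count_map. Qed.

Lemma arc_same x y (a : nat) : Defs.arc (rcons x a) (rcons y a) = Defs.arc x y.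
Proof.
apply/idP/idP => [/arc_rcons[[_ //]|[-> [//]]]|H]; apply/arc_rcons; by left.
Qed.

Lemma arc02 x y : Defs.arc (rcons x 0) (rcons y 2) = false.
Proof. by apply/negP => /arc_rcons[[]|[]]. Qed.

Lemma arc20 x y : Defs.arc (rcons x 2) (rcons y 0) = (last 0 x < 2) && (y == succ x).
Proof.
apply/idP/andP => [/arc_rcons[[]//|[_ [_ [H ->]]]]|[H /eqP ->]]; first by [].
by apply/arc_rcons; right.
Qed.

Lemma narcsC n : narcs n = C (Hset n) (Hset n).
Proof. by rewrite /narcs count_allpairs. Qed.

Definition D n := count (fun x => last 0 x < 2) (Hset n).

Lemma succ_hyp m x : is_hyperbinary m x -> last 0 x < 2 -> is_hyperbinary m.+1 (succ x).
Proof.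
case/lastP: x => [|p e]; first by case/and3P => _ _ /eqP <-.
rewrite succ_rcons last_rcons !hyp_rcons => /and4P[_ _ -> /eqP ->] e2.
rewrite orbT /=; apply/andP; split; [lia | rewrite addnS //].
Qed.

Lemma sum_count (T : Type) (P : pred T) s : \sum_(x <- s) (P x : nat) = count P s.
Proof. by elim: s => [|x s IH]; rewrite ?big_nil ?big_cons ?IH. Qed.

Lemma narcs0 : narcs 0 = 0.
Proof. by rewrite /narcs Hset0. Qed.

Lemma narcs_odd m : narcs (2 * m + 1) = narcs m.
Proof.
rewrite !narcsC (C_perm (Hset_odd m) (Hset_odd m)) C_map /C.
by apply: eq_bigr => x _; apply: eq_count => y; rewrite arc_same.
Qed.

Lemma narcs_even m : narcs (2 * m + 2) = narcs m.+1 + narcs m + D m.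
Proof.
rewrite !narcsC (C_perm (Hset_even m) (Hset_even m)) !C_catl !C_catr !C_map.
have -> : \sum_(x <- Hset m.+1) count (fun y => Defs.arc (rcons x 0) (rcons y 2)) (Hset m) = 0.
  by rewrite big1 // => x _; apply/eqP; rewrite -leqn0 leqNgt -has_count; apply/hasP => -[y _]; rewrite arc02.
have -> : \sum_(x <- Hset m) count (fun y => Defs.arc (rcons x 2) (rcons y 0)) (Hset m.+1) = D m.
  rewrite /D -sum_count big_seq_cond [RHS]big_seq_cond; apply: eq_bigr => x /andP[xH _].
  under eq_count => y do rewrite arc20.
  case L: (last 0 x < 2) => /=; last by rewrite count_pred0.
  rewrite (count_uniq_mem _ (uniq_Hset _)) mem_Hset succ_hyp //.
  by rewrite -mem_Hset.
rewrite /C.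
have E : forall a s t, \sum_(x <- s) count (fun y => Defs.arc (rcons x a) (rcons y a)) t
   = \sum_(u <- s) count (Defs.arc u) t.
  by move=> a s t; apply: eq_bigr => x _; apply: eq_count => y; rewrite arc_same.
rewrite !E; lia.
Qed.

Lemma D0 : D 0 = 1. Proof. by rewrite /D Hset0. Qed.

Lemma D_odd m : D (2 * m + 1) = b m.
Proof.
rewrite /D /b; move/permP: (Hset_odd m) => ->; rewrite count_map.
by rewrite -count_predT; apply: eq_count => x; rewrite /= last_rcons.
Qed.

Lemma D_even m : D (2 * m + 2) = b m.+1.
Proof.
rewrite /D /b; move/permP: (Hset_even m) => ->; rewrite count_cat !count_map.
have -> : count (preim (rcons^~ 2) (fun x : seq nat => last 0 x < 2)) (Hset m) = 0.
  by rewrite (eq_count (a2 := pred0)) ?count_pred0 // => x; rewrite /= last_rcons.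
rewrite addn0 -count_predT; apply: eq_count => x; by rewrite /= last_rcons.
Qed.

Section RingPart.
Local Open Scope ring_scope.

Lemma parity (n : nat) : n = 0%N \/ (exists m, n = (2 * m + 1)%N) \/ (exists m, n = (2 * m + 2)%N).
Proof.
rewrite -[n]odd_double_half; case: (odd n) => /=.
  by right; left; exists n./2; rewrite -muln2; lia.
case: (n./2) => [|k]; first by left.
by right; right; exists k; rewrite -muln2; lia.
Qed.

Lemma v0 : v 0 = 0. Proof. by rewrite /v narcs0 b0. Qed.
Lemma v_odd m : v (2 * m + 1) = v m.
Proof. by rewrite /v narcs_odd b_odd. Qed.
Lemma v_even m : v (2 * m + 2) = v m.+1 + v m + (D m)%:Z - 1.
Proof. rewrite /v narcs_even b_even; lia. Qed.

Lemma b_ge1 n : (0 < b n)%N.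
Proof.
elim/ltn_ind: n => n IH.
case: (parity n) => [|[[m]|[m]]] -> in IH *; first by rewrite b0.
  by rewrite b_odd IH //; lia.
by rewrite b_even ltn_addr // IH //; lia.
Qed.

Lemma D_ge1 n : (0 < D n)%N.
Proof.
case: (parity n) => [->|[[m ->]|[m ->]]]; first by rewrite D0.
  by rewrite D_odd b_ge1.
by rewrite D_even b_ge1.
Qed.

Lemma v_ge0 n : 0 <= v n.
Proof.
elim/ltn_ind: n => n IH.
case: (parity n) => [|[[m]|[m]]] -> in IH *; first by rewrite v0.
  by rewrite v_odd IH //; lia.
rewrite v_even; have := IH m.+1 ltac:(lia); have := IH m ltac:(lia).
have := D_ge1 m; lia.
Qed.

Lemma b1_v0 n : b n = 1%N -> v n = 0.
Proof.
elim/ltn_ind: n => n IH.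
case: (parity n) => [|[[m]|[m]]] -> in IH *; first by rewrite v0.
  by rewrite v_odd b_odd => /IH ->; lia.
by rewrite b_even; have := b_ge1 m; have := b_ge1 m.+1; lia.
Qed.

Lemma b11 i : b i = 1%N -> b i.+1 = 1%N -> i = 0%N.
Proof.
case: (parity i) => [->|[[m ->]|[m ->]]] //.
  rewrite (_ : (2 * m + 1).+1 = 2 * m + 2)%N ?b_even; last by lia.
  by have := b_ge1 m; have := b_ge1 m.+1; lia.
by rewrite b_even; have := b_ge1 m; have := b_ge1 m.+1; lia.
Qed.

End RingPart.


Lemma small : (v 2 = 0%R /\ v 4 = 0%R /\ v 6 = 0%R) /\ (v 8 = 0%R /\ v 10 = 1%R /\ v 12 = 1%R).
Proof. by do ![split]; vm_compute. Qed.

Lemma bsmall : [/\ b 4 = 3, b 5 = 2 & b 6 = 3].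
Proof. by split; vm_compute. Qed.

Theorem mainTheorem3 (n : nat) :
  ~~ odd n -> (v n = 1%Z <-> n = 10 \/ n = 12).
Proof.
elim/ltn_ind: n => n IH.
case: (parity n) => [|[[m]|[m]]] -> in IH *.
- by move=> _; rewrite v0; split => ?; lia.
- by rewrite oddD oddM.
move=> _.
have [m5|m6] := leqP m 5.
  case: small => -[s2 [s4 s6]] [s8 [s10 s12]].
  clear IH; move: m5; case: m => [|[|[|[|[|[|m]]]]]] m5; last by [].
  - by rewrite s2; split => ?; lia.
  - by rewrite s4; split => ?; lia.
  - by rewrite s6; split => ?; lia.
  - by rewrite s8; split => ?; lia.
  - by rewrite s10; split => ?; lia.
  - by rewrite s12; split => ?; lia.
split; last by lia.
case: bsmall => b4 b5 b6.
rewrite v_even => H.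
have vA := v_ge0 m.+1; have vB := v_ge0 m; have dm := D_ge1 m.
case: (parity m) => [|[[j]|[j]]] Em; first by lia.
-
  have Em1 : m.+1 = (2 * j + 2)%N by lia.
  rewrite Em1 in H vA; rewrite Em D_odd v_odd in H dm vB.
  have [d1|d2] : b j = 1%N \/ b j = 2%N by lia.
  + have vj := b1_v0 d1.
    have : v (2 * j + 2) = 1%R by lia.
    move/(IH (2 * j + 2)%N ltac:(lia)); rewrite oddD oddM /= => /(_ isT) [|] Ej.
    * by move: d1; rewrite (_ : j = 4%N); [rewrite b4 | lia].
    * by move: d1; rewrite (_ : j = 5%N); [rewrite b5 | lia].
  + rewrite v_even in H vA.
    have vj1 := v_ge0 j.+1; have Dj := D_ge1 j.
    have Dj1 : D j = 1%N by lia.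
    case: (parity j) => [|[[i]|[i]]] Ej; first by lia.
    * by rewrite Ej D_odd in Dj1; rewrite Ej b_odd Dj1 in d2.
    * rewrite Ej D_even in Dj1; rewrite Ej b_even Dj1 in d2.
      have bi : b i = 1%N by lia.
      by have := b11 bi Dj1; lia.
-
  have Em1 : m.+1 = (2 * j.+1 + 1)%N by lia.
  rewrite Em1 v_odd in H vA; rewrite Em D_even v_even in H dm vB.
  have [d1|d2] : b j.+1 = 1%N \/ b j.+1 = 2%N by have := v_ge0 j; have := D_ge1 j; lia.
  + have vj := b1_v0 d1.
    have : v m = 1%R by rewrite Em v_even; lia.
    move/(IH m ltac:(lia)); rewrite Em oddD oddM /= => /(_ isT) [|] Ej.
    * by move: d1; rewrite (_ : j = 4%N); [rewrite b5 | lia].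
    * by move: d1; rewrite (_ : j = 5%N); [rewrite b6 | lia].
  + have vj0 := v_ge0 j; have Dj := D_ge1 j.
    have Dj1 : D j = 1%N by lia.
    case: (parity j) => [|[[i]|[i]]] Ej; first by lia.
    * rewrite Ej D_odd in Dj1.
      move: d2; rewrite Ej (_ : (2 * i + 1).+1 = 2 * i + 2)%N ?b_even ?Dj1; last by lia.
      move=> d2; have bi1 : b i.+1 = 1%N by lia.
      by have := b11 Dj1 bi1; lia.
    * rewrite Ej D_even in Dj1.
      move: d2; rewrite Ej (_ : (2 * i + 2).+1 = 2 * i.+1 + 1)%N ?b_odd ?Dj1 //; lia.
Qed.
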